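(* Let $0 < b < a \leq 1$. Then \[ (a-b)\left(\frac{1}{ab} + \frac{1}{b+1}\right) < \psi(a) - \psi(b) < (a-b)\left(\frac1{ab} + \frac{\pi^2}6\right). \] Further, if in addition $a, b > \frac12$, then \[ \psi(a) - \psi(b) < (a - b)\left(\frac1{ab} + \frac{\pi^2}{6} - \frac59\right). \]
   Context: $\psi=\Gamma'/\Gamma$ is the digamma function. *)

(* Defs.v *)
From Stdlib Require Import Reals.
From Coquelicot Require Import Coquelicot.
Open Scope R_scope.

Definition Gamma (x : R) : R :=
  RInt_gen (fun t => Rpower t (x - 1) * exp (- t))
           (at_right 0) (Rbar_locally p_infty).

Definition digamma (x : R) : R := Derive Gamma x / Gamma x.

(* Main.v *)
Require Import Defs.
From Stdlib Require Import Reals.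
From Coquelicot Require Import Coquelicot.
Open Scope R_scope.
From Stdlib Require Import Lra Lia Classical.

Lemma cder (f : R -> R) x : ex_derive f x -> @continuous R_UniformSpace R_UniformSpace f x.
Proof. intro H. now apply (@ex_derive_continuous R_AbsRing R_NormedModule). Qed.
Lemma exRc (f : R -> R) a b : (forall z, Rmin a b <= z <= Rmax a b -> @continuous R_UniformSpace R_UniformSpace f z) -> ex_RInt f a b.
Proof. intro H. now apply (@ex_RInt_continuous R_CompleteNormedModule). Qed.

Lemma RInt_lin (f g : R->R) a b c d : ex_RInt f a b -> ex_RInt g a b ->
  RInt (fun x => c * f x - d * g x) a b = c * RInt f a b - d * RInt g a b.
Proof.
  intros Hf Hg.
  apply (@is_RInt_unique R_CompleteNormedModule).
  apply (@is_RInt_minus R_NormedModule _ _ _ _ (c * RInt f a b) (d * RInt g a b)).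
  - apply (@is_RInt_scal R_NormedModule f a b c (RInt f a b)). now apply (@RInt_correct R_CompleteNormedModule).
  - apply (@is_RInt_scal R_NormedModule g a b d (RInt g a b)). now apply (@RInt_correct R_CompleteNormedModule).
Qed.

Definition Ic (m : nat) := RInt (fun x => cos x ^ (2*m)) 0 (PI/2).
Definition Jc (m : nat) := RInt (fun x => x^2 * cos x ^ (2*m)) 0 (PI/2).

Lemma cpow_e (m k : nat) (x : R) : cos x ^ (m + (m+0) + k) = cos x ^ (2*m) * cos x ^ k.
Proof. rewrite <- pow_add. f_equal; lia. Qed.

Lemma ex_Ic m : ex_RInt (fun x => cos x ^ (2*m)) 0 (PI/2).
Proof. apply exRc. intros. apply cder. now auto_derive. Qed.
Lemma ex_Jc m : ex_RInt (fun x => x^2 * cos x ^ (2*m)) 0 (PI/2).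
Proof. apply exRc. intros. apply cder. now auto_derive. Qed.

Lemma Ic_rec m : 2 * INR (m+1) * Ic (m+1) = INR (2*m+1) * Ic m.
Proof.
  assert (H : is_RInt (fun x => 2 * INR (m+1) * cos x ^ (2*(m+1)) - INR (2*m+1) * cos x ^ (2*m)) 0 (PI/2)
     (minus (sin (PI/2) * cos (PI/2) ^ (2*m+1)) (sin 0 * cos 0 ^ (2*m+1)))).
  { apply (is_RInt_derive (fun x => sin x * cos x ^ (2*m+1))).
    - intros x _. auto_derive. easy. rewrite !cpow_e.
      replace (2*(m+1))%nat with (2*m+2)%nat by lia.
      rewrite pow_add. replace (Init.Nat.pred 1) with 0%nat by reflexivity.
      rewrite !plus_INR, !mult_INR. simpl. 
      pose proof (sin2_cos2 x) as H. unfold Rsqr in H.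
      replace (Init.Nat.pred (m+(m+0)+1)) with (m+(m+0))%nat by lia.
      apply Rminus_diag_uniq.
      transitivity (- (2 * INR m + 1) * cos x ^ (m+(m+0)) * (sin x * sin x + cos x * cos x - 1)).
      ring. rewrite H. ring.
    - intros x _. apply cder. auto_derive. easy. }
  rewrite cos_PI2, sin_0 in H. 
  replace (minus _ _) with 0 in H by (rewrite pow_i; [|lia]; unfold minus, plus, opp; simpl; ring).
  apply (@is_RInt_unique R_CompleteNormedModule) in H.
  rewrite RInt_lin in H by apply ex_Ic.
  unfold Ic. replace (2*(m+1))%nat with (2*(m+1))%nat in H by reflexivity. lra.
Qed.

Lemma Jc_rec m : Ic (m+1) = INR (m+1) * INR (2*m+1) * Jc m - 2 * INR (m+1) ^ 2 * Jc (m+1).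
Proof.
  assert (H : is_RInt (fun x => 1 * cos x ^ (2*(m+1)) - 1 * (INR (m+1) * INR (2*m+1) * (x^2 * cos x ^ (2*m)) - 2 * INR (m+1) ^ 2 * (x^2 * cos x ^ (2*(m+1))))) 0 (PI/2)
     (minus ((PI/2) * cos (PI/2) ^ (2*m+2) + INR (m+1) * (PI/2)^2 * sin (PI/2) * cos (PI/2) ^ (2*m+1))
            (0 * cos 0 ^ (2*m+2) + INR (m+1) * 0^2 * sin 0 * cos 0 ^ (2*m+1)))).
  { apply (is_RInt_derive (fun x => x * cos x ^ (2*m+2) + INR (m+1) * x^2 * sin x * cos x ^ (2*m+1))).
    - intros x _. auto_derive. easy. rewrite !cpow_e.
      replace (2*(m+1))%nat with (2*m+2)%nat by lia.
      rewrite !pow_add.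
      pose proof (sin2_cos2 x) as H. unfold Rsqr in H.
      replace (Init.Nat.pred (m+(m+0)+1)) with (m+(m+0))%nat by lia.
      replace (Init.Nat.pred (m+(m+0)+2)) with (m+(m+0)+1)%nat by lia.
      rewrite cpow_e.
      rewrite !plus_INR, !mult_INR. simpl.
      apply Rminus_diag_uniq.
      transitivity (- (INR m + 1) * (2 * INR m + 1) * x * x * cos x ^ (m+(m+0)) * (sin x * sin x + cos x * cos x - 1)).
      ring. rewrite H. ring.
    - intros x _. apply cder. auto_derive. easy. }
  rewrite cos_PI2, sin_0 in H.
  rewrite !pow_i in H by lia. replace (minus _ _) with 0 in H by (unfold minus, plus, opp; simpl; ring).
  apply (@is_RInt_unique R_CompleteNormedModule) in H.
  rewrite RInt_lin in H.
  2:{ apply ex_Ic. }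
  2:{ apply exRc. intros. apply cder. auto_derive. easy. }
  rewrite RInt_lin in H by apply ex_Jc.
  unfold Ic, Jc. lra.
Qed.

Lemma Ic_pos m : 0 < Ic m.
Proof.
  induction m.
  - unfold Ic. simpl. rewrite RInt_const. unfold scal; simpl; unfold mult; simpl. pose proof PI_RGT_0. lra.
  - pose proof (Ic_rec m). replace (S m) with (m+1)%nat by lia.
    assert (0 < INR (m+1)) by (apply lt_0_INR; lia).
    assert (0 < INR (2*m+1)) by (apply lt_0_INR; lia).
    assert (0 < INR (2*m+1) * Ic m) by (apply Rmult_lt_0_compat; lra).
    nra.
Qed.

Lemma Jc_nonneg m : 0 <= Jc m.
Proof.
  apply RInt_ge_0. pose proof PI_RGT_0; lra. apply ex_Jc.
  intros x _. apply Rmult_le_pos. apply pow2_ge_0. rewrite pow_mult. apply pow_le. apply pow2_ge_0.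
Qed.

Definition Tc m := Jc m / Ic m.

Lemma Tc_step m : Tc m - Tc (m+1) = / (2 * INR (m+1) ^ 2).
Proof.
  unfold Tc. pose proof (Ic_rec m). pose proof (Jc_rec m).
  pose proof (Ic_pos m). pose proof (Ic_pos (m+1)).
  assert (0 < INR (m+1)) by (apply lt_0_INR; lia).
  set (A := INR (m+1)) in *. set (B := INR (2*m+1)) in *.
  field_simplify_eq; try lra.
  transitivity (A * Jc m * (B * Ic m) - 2 * A^2 * Ic m * Jc (m+1)). rewrite <- H. ring. rewrite H0. ring.
Qed.

Fixpoint zs (n : nat) : R := match n with O => 0 | S k => zs k + / (INR (S k))^2 end.

Lemma zs_T n : zs n = 2 * (Tc 0 - Tc n).
Proof.
  induction n. simpl. ring.
  change (zs (S n)) with (zs n + / INR (S n) ^ 2). rewrite IHn. pose proof (Tc_step n). replace (S n) with (n+1)%nat by lia.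
  assert (0 < INR (n+1)) by (apply lt_0_INR; lia).
  replace (/ INR (n+1) ^ 2) with (2 * / (2 * INR (n + 1) ^ 2)) by (field; lra). lra.
Qed.

Lemma Tc0 : Tc 0 = PI^2/12.
Proof.
  assert (HI : Ic 0 = PI/2 - 0).
  { unfold Ic. apply (@is_RInt_unique R_CompleteNormedModule).
    apply (is_RInt_derive (fun x => x) (fun x => cos x ^ (2*0))).
    - intros. simpl. auto_derive; auto.
    - intros. apply cder. simpl. auto_derive; auto. }
  assert (HJ : Jc 0 = (PI/2)^3/3 - 0^3/3).
  { unfold Jc. apply (@is_RInt_unique R_CompleteNormedModule).
    apply (is_RInt_derive (fun x => x^3/3) (fun x => x^2 * cos x ^ (2*0))).
    - intros. simpl. auto_derive; auto. field.
    - intros. apply cder. simpl. auto_derive; auto. }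
  unfold Tc. rewrite HI, HJ. pose proof PI_RGT_0. field. lra.
Qed.

Lemma basel_le n : zs n <= PI^2/6.
Proof.
  rewrite zs_T, Tc0. unfold Tc. pose proof (Jc_nonneg n). pose proof (Ic_pos n).
  assert (0 <= Jc n / Ic n) by (apply Rdiv_le_0_compat; lra). lra.
Qed.


Definition cont0 (f : R -> R) := forall t, 0 < t -> @continuous R_UniformSpace R_UniformSpace f t.
Definition Bnd (f : R -> R) := exists M, forall u v, 0 < u -> u <= v -> RInt f u v <= M.

Lemma exR0 f u v : cont0 f -> 0 < u -> u <= v -> ex_RInt f u v.
Proof.
  intros Hf Hu Huv. apply exRc. intros z Hz. apply Hf.
  rewrite Rmin_left in Hz by lra. lra.
Qed.

Lemma RInt_widen f u v u0 v0 : cont0 f -> (forall t, 0 < t -> 0 <= f t) ->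
  0 < u -> u <= u0 -> u0 <= v0 -> v0 <= v -> RInt f u0 v0 <= RInt f u v.
Proof.
  intros Hf Hp Hu H1 H2 H3.
  rewrite <- (RInt_Chasles f u u0 v) by (apply exR0; auto; lra).
  rewrite <- (RInt_Chasles f u0 v0 v) by (apply exR0; auto; lra).
  assert (0 <= RInt f u u0) by (apply RInt_ge_0; auto; [apply exR0; auto; lra | intros; apply Hp; lra]).
  assert (0 <= RInt f v0 v) by (apply RInt_ge_0; auto; [apply exR0; auto; lra | intros; apply Hp; lra]).
  unfold plus; simpl. lra.
Qed.

Lemma ball_R (x e y : R) : Rabs (y - x) < e -> ball x e y.
Proof. intro H. apply H. Qed.

Lemma IG f : cont0 f -> (forall t, 0 < t -> 0 <= f t) -> Bnd f ->
  exists l, is_RInt_gen f (at_right 0) (Rbar_locally p_infty) l /\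
    (forall u v, 0 < u -> u <= v -> RInt f u v <= l).
Proof.
  intros Hf Hp [M HM].
  set (E := fun y => exists u v, 0 < u /\ u <= v /\ y = RInt f u v).
  destruct (completeness E) as [S [HS1 HS2]].
  { exists M. intros y [u [v [Hu [Huv ->]]]]. auto. }
  { exists (RInt f 1 1). exists 1, 1. repeat split; lra. }
  assert (Hub : forall u v, 0 < u -> u <= v -> RInt f u v <= S).
  { intros u v Hu Huv. apply HS1. exists u, v. auto. }
  exists S. split; auto.
  apply filterlimi_locally.
  intros eps.
  destruct (classic (exists u0 v0, 0 < u0 /\ u0 <= v0 /\ S - eps < RInt f u0 v0)) as [[u0 [v0 [Hu0 [Huv0 Hlt]]]] | Hn].
  2:{ exfalso. assert (S <= S - eps). { apply HS2. intros y [u [v [Hu [Huv ->]]]].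
        apply Rnot_lt_le. intro. apply Hn. exists u, v. auto. }
      pose proof (cond_pos eps). lra. }
  apply (Filter_prod _ _ _ (fun u => 0 < u < u0) (fun v => v0 < v)).
  - exists (mkposreal u0 Hu0). intros y Hy Hy0. split; auto.
    unfold ball in Hy; simpl in Hy; unfold AbsRing_ball, abs, minus, plus, opp in Hy; simpl in Hy.
    apply Rabs_lt_between' in Hy. lra.
  - exists v0. auto.
  - intros u v [Hu1 Hu2] Hv. simpl. exists (RInt f u v). split.
    + apply (@RInt_correct R_CompleteNormedModule). apply exR0; auto; lra.
    + apply ball_R. pose proof (Hub u v Hu1 ltac:(lra)).
      pose proof (RInt_widen f u v u0 v0 Hf Hp Hu1 ltac:(lra) Huv0 ltac:(lra)).
      apply Rabs_def1; lra.
Qed.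

Lemma Bnd_le f g : cont0 f -> cont0 g -> (forall t, 0 < t -> f t <= g t) -> Bnd g -> Bnd f.
Proof.
  intros Hf Hg Hfg [M HM]. exists M. intros u v Hu Huv.
  eapply Rle_trans; [|apply (HM u v Hu Huv)].
  apply RInt_le; auto; try (apply exR0; auto). intros; apply Hfg; lra.
Qed.

Lemma cont0_plus f g : cont0 f -> cont0 g -> cont0 (fun t => f t + g t).
Proof. intros Hf Hg t Ht. apply (@continuous_plus R_UniformSpace R_AbsRing R_NormedModule f g); auto. Qed.
Lemma cont0_scal c f : cont0 f -> cont0 (fun t => c * f t).
Proof. intros Hf t Ht. apply (@continuous_scal_r R_UniformSpace R_AbsRing R_NormedModule c f); auto. Qed.

Lemma Bnd_plus f g : cont0 f -> cont0 g -> Bnd f -> Bnd g -> Bnd (fun t => f t + g t).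
Proof.
  intros Hf Hg [M HM] [N HN]. exists (M + N). intros u v Hu Huv.
  rewrite (RInt_plus f g) by (apply exR0; auto). unfold plus; simpl.
  pose proof (HM u v Hu Huv). pose proof (HN u v Hu Huv). lra.
Qed.

Lemma Bnd_scal c f : 0 <= c -> cont0 f -> Bnd f -> Bnd (fun t => c * f t).
Proof.
  intros Hc Hf [M HM]. exists (c * M). intros u v Hu Huv.
  rewrite (RInt_scal f) by (apply exR0; auto). unfold scal; simpl; unfold mult; simpl.
  apply Rmult_le_compat_l; auto.
Qed.


Lemma exp_le_exp x y : x <= y -> exp x <= exp y.
Proof. intros [H|H]. left; now apply exp_increasing. right; now subst. Qed.
Lemma ln_le x y : 0 < x -> x <= y -> ln x <= ln y.
Proof. intros Hx [H|H]. left; apply ln_increasing; auto. right; now subst. Qed.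

Definition p (y t : R) := Rpower t (y - 1) * exp (- t).

Lemma cont0_p y : cont0 (p y).
Proof. intros t Ht. apply cder. unfold p, Rpower. auto_derive. auto. Qed.

Lemma p_pos y t : 0 < p y t.
Proof. unfold p, Rpower. apply Rmult_lt_0_compat; apply exp_pos. Qed.

Lemma ln_le_sub1 s : 0 < s -> ln s <= s - 1.
Proof. intro Hs. pose proof (exp_ineq1_le (ln s)). rewrite exp_ln in H; lra. Qed.

Lemma p_large y t : 1 <= t ->
  p y t <= exp (Rmax y 1 * ln (2 * Rmax y 1)) * exp (- t / 2).
Proof.
  intro Ht. set (k := Rmax y 1).
  assert (Hk : 1 <= k) by apply Rmax_r. assert (Hyk : y <= k) by apply Rmax_l.
  unfold p, Rpower. rewrite <- !exp_plus. apply exp_le_exp.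
  assert (Hl : 0 <= ln t) by (rewrite <- ln_1; apply ln_le; lra).
  assert (H1 : ln (t / (2*k)) <= t / (2*k) - 1) by (apply ln_le_sub1; apply Rdiv_lt_0_compat; lra).
  rewrite ln_div in H1 by lra.
  assert (H2 : k * ln t <= k * ln (2*k) + t/2 - k).
  { assert (k * (ln t - ln (2*k)) <= k * (t / (2*k) - 1)) by (apply Rmult_le_compat_l; lra).
    replace (k * (t / (2*k) - 1)) with (t/2 - k) in H by (field; lra). lra. }
  assert ((y - 1) * ln t <= k * ln t) by (apply Rmult_le_compat_r; lra).
  lra.
Qed.

Lemma p_small y t : 0 < t -> p y t <= Rpower t (y - 1).
Proof.
  intro Ht. unfold p. rewrite <- (Rmult_1_r (Rpower t (y-1))) at 2.
  apply Rmult_le_compat_l. unfold Rpower; left; apply exp_pos.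
  rewrite <- exp_0. apply exp_le_exp. lra.
Qed.

Lemma Bnd_p y : 0 < y -> Bnd (p y).
Proof.
  intro Hy. set (C := exp (Rmax y 1 * ln (2 * Rmax y 1))).
  assert (HC : 0 < C) by apply exp_pos.
  exists (1 / y + 2 * C). intros u v Hu Huv.
  set (u' := Rmin u 1). set (v' := Rmax v 1).
  assert (Hu' : 0 < u' <= u /\ u' <= 1) by (unfold u'; split; [split|]; [apply Rmin_glb_lt; lra | apply Rmin_l | apply Rmin_r]).
  assert (Hv' : v <= v' /\ 1 <= v') by (unfold v'; split; [apply Rmax_l | apply Rmax_r]).
  eapply Rle_trans. apply (RInt_widen (p y) u' v' u v (cont0_p y)); try lra. intros; left; apply p_pos.
  rewrite <- (RInt_Chasles (p y) u' 1 v') by (apply exR0; [apply cont0_p | lra | lra]).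
  unfold plus; simpl.
  assert (A1 : RInt (p y) u' 1 <= 1 / y).
  { eapply Rle_trans. apply (RInt_le (p y) (fun t => Rpower t (y-1))); try lra.
    apply exR0; [apply cont0_p | lra | lra].
    apply exR0; [|lra|lra]. intros t Ht. apply cder. unfold Rpower. auto_derive. auto.
    intros; apply p_small; lra.
    replace (RInt (fun t => Rpower t (y-1)) u' 1) with (Rpower 1 y / y - Rpower u' y / y).
    { unfold Rpower. rewrite ln_1, Rmult_0_r, exp_0.
      assert (0 <= exp (y * ln u') / y) by (apply Rdiv_le_0_compat; [left; apply exp_pos | lra]). lra. }
    symmetry. apply (@is_RInt_unique R_CompleteNormedModule).
    apply (is_RInt_derive (fun t => Rpower t y / y) (fun t => Rpower t (y-1))).
    - intros t Ht. rewrite Rmin_left in Ht by lra. unfold Rpower. auto_derive. lra.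
      replace ((y-1) * ln t) with (y * ln t + - ln t) by ring. rewrite exp_plus, exp_Ropp, exp_ln by lra.
      field. lra.
    - intros t Ht. rewrite Rmin_left in Ht by lra. apply cder. unfold Rpower. auto_derive. lra. }
  assert (A2 : RInt (p y) 1 v' <= 2 * C).
  { eapply Rle_trans. apply (RInt_le (p y) (fun t => C * exp (- t / 2))); try lra.
    apply exR0; [apply cont0_p | lra | lra].
    apply exR0; [|lra|lra]. intros t Ht. apply cder. auto_derive. auto.
    intros; apply p_large; lra.
    replace (RInt (fun t => C * exp (- t / 2)) 1 v') with ((-2 * C * exp (- v' / 2)) - (-2 * C * exp (- 1 / 2))).
    { assert (exp (- 1 / 2) <= 1) by (rewrite <- exp_0; apply exp_le_exp; lra).
      pose proof (exp_pos (- v' / 2)). nra. }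
    symmetry. apply (@is_RInt_unique R_CompleteNormedModule).
    apply (is_RInt_derive (fun t => -2 * C * exp (- t / 2)) (fun t => C * exp (- t / 2))).
    - intros t Ht. auto_derive. auto. replace (exp (- t * / 2)) with (exp (- t / 2)) by (f_equal; field). field.
    - intros t Ht. apply cder. auto_derive. auto. }
  lra.
Qed.


Notation Fa := (at_right 0).
Notation Fb := (Rbar_locally p_infty).

Lemma Gamma_is y : 0 < y -> is_RInt_gen (p y) Fa Fb (Gamma y) /\
  (forall u v, 0 < u -> u <= v -> RInt (p y) u v <= Gamma y).
Proof.
  intro Hy. destruct (IG (p y) (cont0_p y) (fun t _ => Rlt_le _ _ (p_pos y t)) (Bnd_p y Hy)) as [l [H1 H2]].
  assert (E : Gamma y = l).
  { unfold Gamma. change (RInt_gen (p y) Fa Fb = l). apply (@is_RInt_gen_unique R_CompleteNormedModule Fa Fb _ _ (p y) l H1). }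
  rewrite E. auto.
Qed.

Lemma Gamma_pos y : 0 < y -> 0 < Gamma y.
Proof.
  intro Hy. destruct (Gamma_is y Hy) as [_ H]. eapply Rlt_le_trans; [|apply (H 1 2); lra].
  apply RInt_gt_0. lra. intros; apply p_pos. intros; apply cont0_p; lra.
Qed.

Lemma is_RInt_gen_ext_all (f g : R -> R) l : (forall t, f t = g t) ->
  is_RInt_gen f Fa Fb l -> is_RInt_gen g Fa Fb l.
Proof.
  intros H Hf. refine (is_RInt_gen_ext f g l _ Hf). apply filter_forall. intros; apply H.
Qed.

Lemma exp_rem u : 0 <= exp u - 1 - u <= u^2 * exp (Rabs u).
Proof.
  pose proof (exp_ineq1_le u) as H1. pose proof (exp_ineq1_le (- u)) as H2.
  assert (Hm : exp u * exp (- u) = 1) by (rewrite <- exp_plus; replace (u + - u) with 0 by ring; apply exp_0).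
  pose proof (exp_pos u). pose proof (exp_pos (-u)).
  split. lra.
  destruct (Rle_dec 0 u) as [Hu|Hu].
  - rewrite Rabs_right by lra.
    (* exp u - 1 - u <= u (exp u - 1) <= u * u exp u *)
    assert (A : exp u * (1 - u) <= 1) by nra.
    assert (B : exp u - 1 <= u * exp u) by nra.
    nra.
  - rewrite Rabs_left by lra.
    assert (A : exp u * (1 - u) <= 1) by nra.
    assert (B : 1 <= exp (- u)) by (rewrite <- exp_0; apply exp_le_exp; lra).
    nra.
Qed.

Lemma abs_le_exp e s : 0 < e -> e * Rabs s <= exp (e * s) + exp (- (e * s)).
Proof.
  intro He. pose proof (exp_pos (e*s)). pose proof (exp_pos (-(e*s))).
  destruct (Rle_dec 0 s) as [Hs|Hs].
  - rewrite Rabs_right by lra. pose proof (exp_ineq1_le (e*s)). lra.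
  - rewrite Rabs_left by lra. pose proof (exp_ineq1_le (-(e*s))). lra.
Qed.

Lemma exp_abs_le a s : 0 <= a -> exp (a * Rabs s) <= exp (a * s) + exp (- (a * s)).
Proof.
  intro Ha. pose proof (exp_pos (a*s)). pose proof (exp_pos (-(a*s))).
  destruct (Rle_dec 0 s) as [Hs|Hs].
  - rewrite Rabs_right by lra. lra.
  - rewrite Rabs_left by lra. replace (a * - s) with (- (a * s)) by ring. lra.
Qed.

Lemma p_shift y c t : 0 < t -> p (y + c) t = exp (c * ln t) * p y t.
Proof.
  intro Ht. unfold p, Rpower. replace ((y + c - 1) * ln t) with (c * ln t + (y - 1) * ln t) by ring.
  rewrite exp_plus. ring.
Qed.


Lemma cont0_lnp x : cont0 (fun t => ln t * p x t).
Proof. intros t Ht. apply cder. unfold p, Rpower. auto_derive. auto. Qed.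

Lemma Gamma_derive x : 0 < x -> exists D, is_derive Gamma x D.
Proof.
  intro Hx. set (e := x / 8). set (d := x / 4).
  assert (He : 0 < e) by (unfold e; lra). assert (Hd : 0 < d) by (unfold d; lra).
  set (K1 := fun t => (1/e) * (p (x + e) t + p (x + - e) t)).
  assert (cK1 : cont0 K1). { apply cont0_scal, cont0_plus; apply cont0_p. }
  assert (bK1 : Bnd K1). { apply Bnd_scal. left; apply Rdiv_lt_0_compat; lra.
     apply cont0_plus; apply cont0_p. apply Bnd_plus; try apply cont0_p; apply Bnd_p; unfold e; lra. }
  assert (HK1 : forall t, 0 < t -> Rabs (ln t) * p x t <= K1 t).
  { intros t Ht. unfold K1. rewrite !p_shift by auto.
    pose proof (abs_le_exp e (ln t) He). pose proof (p_pos x t).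
    replace (- e * ln t) with (- (e * ln t)) by ring.
    assert (e * (Rabs (ln t) * p x t) <= (exp (e * ln t) + exp (- (e * ln t))) * p x t)
      by (rewrite <- Rmult_assoc; apply Rmult_le_compat_r; lra).
    apply (Rmult_le_reg_l e); auto.
    replace (e * (1 / e * (exp (e * ln t) * p x t + exp (- (e * ln t)) * p x t)))
      with ((exp (e * ln t) + exp (- (e * ln t))) * p x t) by (field; lra). lra. }
  set (f1 := fun t => ln t * p x t + K1 t).
  assert (cf1 : cont0 f1) by (apply cont0_plus; auto; apply cont0_lnp).
  assert (pf1 : forall t, 0 < t -> 0 <= f1 t /\ f1 t <= 2 * K1 t).
  { intros t Ht. unfold f1. pose proof (HK1 t Ht). pose proof (p_pos x t).
    rewrite <- (Rabs_pos_eq (p x t)) in H by lra. rewrite <- Rabs_mult in H.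
    apply Rabs_le_between in H. lra. }
  destruct (IG f1 cf1 (fun t Ht => proj1 (pf1 t Ht))) as [l1 [Hl1 _]].
  { apply (Bnd_le f1 (fun t => 2 * K1 t)); auto. apply cont0_scal; auto.
    intros; apply pf1; auto. apply Bnd_scal; auto; lra. }
  destruct (IG K1 cK1) as [lK [HlK _]]; auto.
  { intros t Ht. pose proof (HK1 t Ht). pose proof (Rabs_pos (ln t)). pose proof (p_pos x t).
    pose proof (Rmult_le_pos _ _ H0 (Rlt_le _ _ H1)). lra. }
  set (D := l1 - lK).
  assert (HD : is_RInt_gen (fun t => ln t * p x t) Fa Fb D).
  { apply (is_RInt_gen_ext_all (fun t => minus (f1 t) (K1 t))).
    intros t. unfold f1, minus, plus, opp; simpl. ring.
    exact (@is_RInt_gen_minus R_NormedModule Fa Fb _ _ f1 K1 l1 lK Hl1 HlK). }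
  set (B := fun t => (2 / e^2) * (p (x + (2*e + d)) t + p (x + (2*e - d)) t + p (x + (-(2*e) + d)) t + p (x + (-(2*e) - d)) t)).
  assert (cB : cont0 B).
  { apply cont0_scal. apply cont0_plus; [apply cont0_plus; [apply cont0_plus|]|]; apply cont0_p. }
  assert (bB : Bnd B).
  { apply Bnd_scal. left; apply Rdiv_lt_0_compat; [lra | apply pow_lt; lra].
    apply cont0_plus; [apply cont0_plus; [apply cont0_plus|]|]; apply cont0_p.
    apply Bnd_plus; [apply cont0_plus; [apply cont0_plus|]; apply cont0_p | apply cont0_p | |].
    apply Bnd_plus; [apply cont0_plus; apply cont0_p | apply cont0_p | |].
    apply Bnd_plus; [apply cont0_p | apply cont0_p | |].
    all: apply Bnd_p; unfold e, d; lra. }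
  destruct (IG B cB) as [KB [HKB HKBb]]; auto.
  { intros t Ht. unfold B. pose proof (p_pos (x + (2*e + d)) t). pose proof (p_pos (x + (2*e - d)) t).
    pose proof (p_pos (x + (-(2*e) + d)) t). pose proof (p_pos (x + (-(2*e) - d)) t).
    apply Rmult_le_pos. left; apply Rdiv_lt_0_compat; [lra | apply pow_lt; lra]. lra. }
  assert (Hr : forall h t, 0 < t -> Rabs h <= d ->
      0 <= p (x + h) t - p x t - h * (ln t * p x t) <= h^2 * B t).
  { intros h t Ht Hh. set (s := ln t).
    rewrite p_shift by auto. fold s.
    pose proof (exp_rem (h * s)) as [R1 R2]. pose proof (p_pos x t) as Pp.
    replace (exp (h * s) * p x t - p x t - h * (s * p x t)) with ((exp (h * s) - 1 - h * s) * p x t) by ring.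
    split. apply Rmult_le_pos; lra.
    assert (E1 : exp (Rabs (h * s)) <= exp (d * s) + exp (- (d * s))).
    { eapply Rle_trans; [|apply exp_abs_le; lra]. apply exp_le_exp. rewrite Rabs_mult.
      apply Rmult_le_compat_r; auto. apply Rabs_pos. }
    assert (E2 : e * Rabs s <= exp (e * s) + exp (- (e * s))) by (apply abs_le_exp; auto).
    assert (E3 : s^2 <= 2 / e^2 * (exp (2 * e * s) + exp (- (2 * e * s)))).
    { assert (e^2 * s^2 <= (exp (e * s) + exp (- (e * s)))^2).
      { replace (e^2 * s^2) with ((e * Rabs s)^2) by (rewrite <- (pow2_abs s); ring).
        pose proof (Rabs_pos s). apply pow_maj_Rabs. rewrite Rabs_pos_eq by nra. lra. }
      assert (AB : exp (e*s) * exp (-(e*s)) = 1) by (rewrite <- exp_plus; replace (e*s + -(e*s)) with 0 by ring; apply exp_0).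
      assert (A2 : exp (e*s)^2 = exp (2*e*s)) by (simpl; rewrite Rmult_1_r, <- exp_plus; f_equal; ring).
      assert (B2 : exp (-(e*s))^2 = exp (-(2*e*s))) by (simpl; rewrite Rmult_1_r, <- exp_plus; f_equal; ring).
      replace ((exp (e * s) + exp (- (e * s)))^2) with (exp (e*s)^2 + 2 * (exp (e*s) * exp (-(e*s))) + exp (-(e*s))^2) in H by ring.
      rewrite AB, A2, B2 in H.
      pose proof (exp_ineq1_le (2*e*s)). pose proof (exp_ineq1_le (-(2*e*s))).
      apply (Rmult_le_reg_l (e^2)). apply pow_lt; lra.
      replace (e^2 * (2 / e^2 * (exp (2*e*s) + exp (-(2*e*s))))) with (2 * (exp (2*e*s) + exp (-(2*e*s)))) by (field; lra). lra. }
    assert (EB : h^2 * B t = h^2 * (2 / e^2 * (exp (2*e*s) + exp (-(2*e*s))) * (exp (d*s) + exp (-(d*s)))) * p x t).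
    { unfold B. rewrite !p_shift by auto. fold s.
      replace ((2*e+d) * s) with (2*e*s + d*s) by ring. replace ((2*e-d) * s) with (2*e*s + - (d*s)) by ring.
      replace ((-(2*e)+d) * s) with (-(2*e*s) + d*s) by ring. replace ((-(2*e)-d) * s) with (-(2*e*s) + - (d*s)) by ring.
      rewrite !exp_plus. ring. }
    rewrite EB. apply Rmult_le_compat_r; [lra|].
    eapply Rle_trans. apply R2.
    replace ((h * s)^2) with (h^2 * s^2) by ring.
    rewrite Rmult_assoc. apply Rmult_le_compat_l. apply pow2_ge_0.
    pose proof (exp_pos (Rabs (h*s))). pose proof (exp_pos (d*s)). pose proof (exp_pos (-(d*s))).
    apply Rmult_le_compat; try lra. apply pow2_ge_0. }
  exists D. apply is_derive_Reals. intros eps Heps.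
  assert (HKB0 : 0 <= KB).
  { pose proof (HKBb 1 1 Rlt_0_1 (Rle_refl 1)). rewrite RInt_point in H. exact H. }
  assert (Hdel : 0 < Rmin d (eps / (KB + 1))) by (apply Rmin_glb_lt; auto; apply Rdiv_lt_0_compat; lra).
  exists (mkposreal _ Hdel). intros h Hh0 Hh. simpl in Hh.
  assert (Hhd : Rabs h <= d) by (pose proof (Rmin_l d (eps / (KB + 1))); lra).
  assert (Hhe : Rabs h < eps / (KB + 1)) by (pose proof (Rmin_r d (eps / (KB + 1))); lra).
  assert (Hxh : 0 < x + h) by (pose proof (Rabs_le_between' h 0 d); apply Rabs_le_between in Hhd; unfold d in *; lra).
  destruct (Gamma_is (x + h) Hxh) as [Gh _]. destruct (Gamma_is x Hx) as [G0 _].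
  assert (Hrem : is_RInt_gen (fun t => p (x + h) t - p x t - h * (ln t * p x t)) Fa Fb
                  (Gamma (x+h) - Gamma x - h * D)).
  { apply (is_RInt_gen_ext_all (fun t => minus (minus (p (x + h) t) (p x t)) (scal h (ln t * p x t)))).
    intros t. unfold minus, plus, opp, scal; simpl; unfold mult; simpl. ring.
    apply (@is_RInt_gen_minus R_NormedModule); try apply _.
    apply (@is_RInt_gen_minus R_NormedModule); try apply _; auto.
    apply (@is_RInt_gen_scal R_NormedModule); try apply _; auto. }
  assert (HB2 : is_RInt_gen (fun t => h^2 * B t) Fa Fb (h^2 * KB)).
  { apply (@is_RInt_gen_scal R_NormedModule _ _ _ _ B (h^2) KB). auto. }
  assert (Hn : Rabs (Gamma (x+h) - Gamma x - h * D) <= h^2 * KB).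
  { refine (@RInt_gen_norm R_CompleteNormedModule Fa Fb _ _ (fun t => p (x + h) t - p x t - h * (ln t * p x t)) (fun t => h^2 * B t) _ _ _ _ Hrem HB2).
    - apply (Filter_prod _ _ _ (fun u => 0 < u < 1) (fun v => 1 < v)).
      + exists (mkposreal 1 Rlt_0_1). intros y Hy Hy0. split; auto.
        unfold ball in Hy; simpl in Hy; unfold AbsRing_ball, abs, minus, plus, opp in Hy; simpl in Hy.
        apply Rabs_lt_between' in Hy. lra.
      + exists 1. auto.
      + intros u v Hu Hv. simpl. lra.
    - apply (Filter_prod _ _ _ (fun u => 0 < u < 1) (fun v => 1 < v)).
      + exists (mkposreal 1 Rlt_0_1). intros y Hy Hy0. split; auto.
        unfold ball in Hy; simpl in Hy; unfold AbsRing_ball, abs, minus, plus, opp in Hy; simpl in Hy.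
        apply Rabs_lt_between' in Hy. lra.
      + exists 1. auto.
      + intros u v Hu Hv t Ht. simpl in Ht. unfold norm; simpl; unfold abs; simpl.
        pose proof (Hr h t ltac:(lra) Hhd). rewrite Rabs_pos_eq; lra. }
  assert (Hh0' : 0 < Rabs h) by (apply Rabs_pos_lt; auto).
  replace ((Gamma (x + h) - Gamma x) / h - D) with ((Gamma (x+h) - Gamma x - h * D) / h) by (field; auto).
  rewrite Rabs_div by auto.
  apply (Rmult_lt_reg_r (Rabs h)); auto. unfold Rdiv. rewrite Rmult_assoc, Rinv_l, Rmult_1_r by lra.
  eapply Rle_lt_trans. apply Hn. rewrite <- (pow2_abs h).
  assert (Rabs h * (KB + 1) < eps).
  { apply (Rmult_lt_compat_r (KB+1)) in Hhe; [|lra]. unfold Rdiv in Hhe. rewrite Rmult_assoc, Rinv_l, Rmult_1_r in Hhe by lra. lra. }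
  nra.
Qed.


Lemma FTC_gen (g F : R -> R) :
  (forall u v, 0 < u -> u <= v -> is_RInt g u v (F v - F u)) ->
  (forall eps, 0 < eps -> exists del, 0 < del /\ forall t, 0 < t < del -> Rabs (F t) < eps) ->
  (forall eps, 0 < eps -> exists M, forall t, M < t -> Rabs (F t) < eps) ->
  is_RInt_gen g Fa Fb 0.
Proof.
  intros HI H0 Hi. apply filterlimi_locally. intros eps.
  pose proof (cond_pos eps) as Heps.
  destruct (H0 (eps/2)) as [del [Hdel Hd]]; [lra|].
  destruct (Hi (eps/2)) as [M HM]; [lra|].
  assert (Hm : 0 < Rmin del 1) by (apply Rmin_glb_lt; lra).
  apply (Filter_prod _ _ _ (fun u => 0 < u < Rmin del 1) (fun v => Rmax M 1 < v)).
  - exists (mkposreal _ Hm). intros y Hy Hy0. split; auto.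
    unfold ball in Hy; simpl in Hy; unfold AbsRing_ball, abs, minus, plus, opp in Hy; simpl in Hy.
    apply Rabs_lt_between' in Hy. lra.
  - exists (Rmax M 1). auto.
  - intros u v [Hu1 Hu2] Hv. simpl. exists (F v - F u). split.
    + apply HI; auto. pose proof (Rmin_r del 1). pose proof (Rmax_r M 1). lra.
    + apply ball_R. pose proof (Rmin_l del 1). pose proof (Rmax_l M 1).
      pose proof (Hd u ltac:(lra)). pose proof (HM v ltac:(lra)).
      replace (F v - F u - 0) with (F v + - F u) by ring.
      eapply Rle_lt_trans. apply Rabs_triang. rewrite Rabs_Ropp. lra.
Qed.

Lemma Gamma_rec x : 0 < x -> Gamma (x + 1) = x * Gamma x.
Proof.
  intro Hx.
  set (F := fun t => - (exp (x * ln t) * exp (- t))).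
  assert (H : is_RInt_gen (fun t => p (x + 1) t - x * p x t) Fa Fb 0).
  { apply (FTC_gen _ F).
    - intros u v Hu Huv.
      replace (F v - F u) with (minus (F v) (F u)) by reflexivity.
      apply (is_RInt_derive F).
      + intros t Ht. rewrite Rmin_left in Ht by lra.
        assert (Ee : exp (x * ln t + - ln t) = exp (x * ln t) / t) by (rewrite exp_plus, exp_Ropp, exp_ln; [field|]; lra).
        unfold F, p, Rpower. auto_derive. lra.
        replace (x + 1 - 1) with x by ring.
        replace ((x - 1) * ln t) with (x * ln t + - ln t) by ring.
        rewrite Ee. field. lra.
      + intros t Ht. rewrite Rmin_left in Ht by lra. apply cder. unfold p, Rpower. auto_derive. lra.
    - intros eps Heps. exists (exp (ln eps / x)). split. apply exp_pos.
      intros t [Ht1 Ht2]. unfold F. rewrite Rabs_Ropp, Rabs_pos_eq.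
      2:{ left; apply Rmult_lt_0_compat; apply exp_pos. }
      assert (ln t < ln eps / x). { rewrite <- (ln_exp (ln eps / x)). apply ln_increasing; auto. }
      assert (x * ln t < ln eps). { apply (Rmult_lt_compat_l x) in H; auto. field_simplify in H; lra. }
      apply exp_increasing in H0. rewrite exp_ln in H0 by auto.
      assert (exp (- t) <= 1) by (rewrite <- exp_0; apply exp_le_exp; lra).
      pose proof (exp_pos (x * ln t)). nra.
    - intros eps Heps. set (C := exp (Rmax (x+1) 1 * ln (2 * Rmax (x+1) 1))).
      assert (HC : 0 < C) by apply exp_pos.
      exists (Rmax 1 (- 2 * ln (eps / C))). intros t Ht.
      pose proof (Rmax_l 1 (- 2 * ln (eps / C))). pose proof (Rmax_r 1 (- 2 * ln (eps / C))).
      pose proof (p_large (x+1) t ltac:(lra)).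
      unfold F. rewrite Rabs_Ropp, Rabs_pos_eq.
      2:{ left; apply Rmult_lt_0_compat; apply exp_pos. }
      replace (exp (x * ln t) * exp (- t)) with (p (x+1) t) by (unfold p, Rpower; f_equal; f_equal; f_equal; ring).
      eapply Rle_lt_trans. apply H1. fold C.
      assert (exp (- t / 2) < eps / C).
      { rewrite <- (exp_ln (eps / C)) by (apply Rdiv_lt_0_compat; auto). apply exp_increasing. lra. }
      apply (Rmult_lt_compat_l C) in H2; auto. replace (C * (eps / C)) with eps in H2 by (field; lra). lra. }
  destruct (Gamma_is (x+1) ltac:(lra)) as [G1 _]. destruct (Gamma_is x Hx) as [G0 _].
  assert (H' : is_RInt_gen (fun t => p (x + 1) t - x * p x t) Fa Fb (Gamma (x+1) - x * Gamma x)).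
  { apply (is_RInt_gen_ext_all (fun t => minus (p (x + 1) t) (scal x (p x t)))).
    intros t. reflexivity.
    apply (@is_RInt_gen_minus R_NormedModule); try apply _; auto.
    apply (@is_RInt_gen_scal R_NormedModule); try apply _; auto. }
  apply (@is_RInt_gen_unique R_CompleteNormedModule Fa Fb _ _) in H.
  apply (@is_RInt_gen_unique R_CompleteNormedModule Fa Fb _ _) in H'.
  rewrite H in H'. lra.
Qed.


Lemma DG x : 0 < x -> is_derive Gamma x (Derive Gamma x).
Proof.
  intro Hx. destruct (Gamma_derive x Hx) as [D HD].
  rewrite (is_derive_unique _ _ _ HD). exact HD.
Qed.

Lemma locally_pos x : 0 < x -> locally x (fun y => 0 < y).
Proof.
  intro Hx. exists (mkposreal x Hx). intros y Hy.
  unfold ball in Hy; simpl in Hy; unfold AbsRing_ball, abs, minus, plus, opp in Hy; simpl in Hy.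
  apply Rabs_lt_between' in Hy. lra.
Qed.

Lemma psi_rec x : 0 < x -> digamma (x + 1) = digamma x + 1 / x.
Proof.
  intro Hx.
  pose proof (DG x Hx) as D0. pose proof (DG (x+1) ltac:(lra)) as D1.
  assert (H1 : is_derive (fun y => Gamma (y + 1)) x (Derive Gamma (x+1))).
  { pose proof (is_derive_comp Gamma (fun y => y + 1) x (Derive Gamma (x+1)) 1 D1) as H.
    assert (is_derive (fun y : R => y + 1) x 1) by (auto_derive; auto; ring).
    specialize (H H0). unfold scal in H; simpl in H; unfold mult in H; simpl in H.
    rewrite Rmult_1_l in H. exact H. }
  assert (H2 : is_derive (fun y => Gamma (y + 1)) x (Gamma x + x * Derive Gamma x)).
  { apply (is_derive_ext_loc (fun y => y * Gamma y)).
    - apply (filter_imp (fun y => 0 < y)); [|apply locally_pos; auto].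
      intros y Hy. symmetry. apply Gamma_rec; auto.
    - pose proof (is_derive_mult (fun y => y) Gamma x 1 (Derive Gamma x)) as H.
      assert (is_derive (fun y : R => y) x 1) by (auto_derive; auto).
      specialize (H H0 D0). 
      assert (Hc : forall n m : R_AbsRing, mult n m = mult m n) by (intros; apply Rmult_comm).
      specialize (H Hc). unfold plus, mult in H; simpl in H. 
      replace (Gamma x + x * Derive Gamma x) with (1 * Gamma x + x * Derive Gamma x) by ring. exact H. }
  pose proof (is_derive_unique _ _ _ H1) as E1. pose proof (is_derive_unique _ _ _ H2) as E2.
  rewrite E1 in E2.
  unfold digamma. rewrite E2, Gamma_rec by auto.
  pose proof (Gamma_pos x Hx). field. lra.
Qed.

Lemma is_RInt_gen_nonneg (g : R -> R) l : (forall t, 0 < t -> 0 <= g t) -> is_RInt_gen g Fa Fb l -> 0 <= l.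
Proof.
  intros Hg Hl.
  destruct (Gamma_is 1 Rlt_0_1) as [G1 _].
  assert (Z : is_RInt_gen (fun t => 0 * p 1 t) Fa Fb (0 * Gamma 1)).
  { exact (@is_RInt_gen_scal R_NormedModule Fa Fb _ _ (p 1) 0 (Gamma 1) G1). }
  rewrite Rmult_0_l in Z.
  pose proof (@RInt_gen_norm R_CompleteNormedModule Fa Fb _ _ (fun t => 0 * p 1 t) g 0 l) as H.
  assert (Hp : filter_prod Fa Fb (fun ab : R * R => 0 < fst ab < 1 /\ 1 < snd ab)).
  { apply (Filter_prod _ _ _ (fun u => 0 < u < 1) (fun v => 1 < v)).
    + exists (mkposreal 1 Rlt_0_1). intros y Hy Hy0. split; auto.
      unfold ball in Hy; simpl in Hy; unfold AbsRing_ball, abs, minus, plus, opp in Hy; simpl in Hy.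
      apply Rabs_lt_between' in Hy. lra.
    + exists 1. auto.
    + intros u v Hu Hv. simpl. auto. }
  assert (norm (0 : R_CompleteNormedModule) <= l).
  { apply H; auto.
    - eapply filter_imp; [|exact Hp]. intros [u v] [? ?]; simpl in *; lra.
    - eapply filter_imp; [|exact Hp]. intros [u v] [? ?] t Ht; simpl in *.
      unfold norm; simpl; unfold abs; simpl. rewrite Rmult_0_l, Rabs_R0. apply Hg. lra. }
  unfold norm in H0; simpl in H0; unfold abs in H0; simpl in H0. rewrite Rabs_R0 in H0. exact H0.
Qed.

Lemma Gamma_CS s t : 0 < s -> 0 < t -> Gamma ((s + t) / 2) ^ 2 <= Gamma s * Gamma t.
Proof.
  intros Hs Ht. set (m := (s + t) / 2).
  assert (Hm : 0 < m) by (unfold m; lra).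
  set (lam := Gamma m / Gamma t).
  destruct (Gamma_is s Hs) as [Gs _]. destruct (Gamma_is t Ht) as [Gt _]. destruct (Gamma_is m Hm) as [Gm _].
  assert (H : is_RInt_gen (fun u => p s u - (2 * lam) * p m u + lam^2 * p t u) Fa Fb
               (Gamma s - (2 * lam) * Gamma m + lam^2 * Gamma t)).
  { apply (is_RInt_gen_ext_all (fun u => plus (minus (p s u) (scal (2 * lam) (p m u))) (scal (lam^2) (p t u)))).
    intros u. reflexivity.
    apply (@is_RInt_gen_plus R_NormedModule); try apply _.
    apply (@is_RInt_gen_minus R_NormedModule); try apply _; auto.
    apply (@is_RInt_gen_scal R_NormedModule); try apply _; auto.
    apply (@is_RInt_gen_scal R_NormedModule); try apply _; auto. }
  apply is_RInt_gen_nonneg in H.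
  2:{ intros u Hu. 
      assert (E : p m u ^ 2 = p s u * p t u).
      { unfold p, Rpower. simpl. rewrite Rmult_1_r. rewrite <- !exp_plus. f_equal. unfold m. field. }
      pose proof (p_pos s u). pose proof (p_pos t u).
      assert (0 <= p s u * (p s u - 2 * lam * p m u + lam ^ 2 * p t u)).
      { replace (p s u * (p s u - 2 * lam * p m u + lam ^ 2 * p t u)) with ((p s u - lam * p m u)^2 + lam^2 * (p s u * p t u - p m u ^ 2)) by ring.
        rewrite E. pose proof (pow2_ge_0 (p s u - lam * p m u)). lra. }
      apply (Rmult_le_reg_l (p s u)); auto. lra. }
  pose proof (Gamma_pos t Ht). pose proof (Gamma_pos s Hs).
  unfold lam in H. 
  assert (0 <= Gamma s * Gamma t - Gamma m ^ 2).
  { replace (Gamma s * Gamma t - Gamma m ^ 2) with (Gamma t * (Gamma s - 2 * (Gamma m / Gamma t) * Gamma m + (Gamma m / Gamma t) ^ 2 * Gamma t)) by (field; lra).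
    apply Rmult_le_pos; lra. }
  lra.
Qed.


Definition LG z := ln (Gamma z).

Lemma LG_mid z h : 0 < z -> 0 < h -> LG (z + h) - LG z <= LG (z + 2 * h) - LG (z + h).
Proof.
  intros Hz Hh. pose proof (Gamma_CS z (z + 2*h) Hz ltac:(lra)) as H.
  replace ((z + (z + 2 * h)) / 2) with (z + h) in H by field.
  pose proof (Gamma_pos (z+h) ltac:(lra)). pose proof (Gamma_pos z Hz). pose proof (Gamma_pos (z + 2*h) ltac:(lra)).
  apply ln_le in H; [|apply pow_lt; lra].
  rewrite ln_pow in H by lra. rewrite ln_mult in H by lra. unfold LG. simpl in H. lra.
Qed.

Lemma LG_chain z h k : 0 < z -> 0 < h -> LG (z + h) - LG z <= LG (z + INR (k+1) * h) - LG (z + INR k * h).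
Proof.
  intros Hz Hh. induction k.
  - simpl. replace (z + 1 * h) with (z + h) by ring. replace (z + 0 * h) with z by ring. lra.
  - eapply Rle_trans. apply IHk.
    pose proof (pos_INR k).
    assert (Hw : 0 < z + INR k * h) by nra.
    pose proof (LG_mid (z + INR k * h) h Hw Hh) as H0.
    replace (z + INR (S k + 1) * h) with (z + INR k * h + 2 * h) by (rewrite plus_INR, S_INR; simpl; ring).
    replace (z + INR (S k) * h) with (z + INR k * h + h) by (rewrite S_INR; ring).
    replace (z + INR (k + 1) * h) with (z + INR k * h + h) by (rewrite plus_INR; simpl; ring).
    exact H0.
Qed.

Lemma LG_der z : 0 < z -> derivable_pt_lim LG z (digamma z).
Proof.
  intro Hz. apply is_derive_Reals.
  pose proof (Gamma_pos z Hz).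
  pose proof (is_derive_comp ln Gamma z (/ Gamma z) (Derive Gamma z) (is_derive_ln _ H) (DG z Hz)) as E.
  unfold digamma, LG. unfold scal in E; simpl in E; unfold mult in E; simpl in E.
  replace (Derive Gamma z / Gamma z) with (Derive Gamma z * / Gamma z) by reflexivity. exact E.
Qed.

Lemma psi_mono x y : 0 < x -> x < y -> digamma x <= digamma y.
Proof.
  intros Hx Hxy. apply Rnot_lt_le. intro Hlt.
  set (eps := (digamma x - digamma y) / 2).
  assert (He : 0 < eps) by (unfold eps; lra).
  destruct (LG_der x Hx eps He) as [d1 Hd1].
  destruct (LG_der y ltac:(lra) eps He) as [d2 Hd2].
  assert (Hdm : 0 < Rmin d1 d2) by (apply Rmin_glb_lt; apply cond_pos).
  destruct (archimed_cor1 (Rmin d1 d2 / (y - x))) as [n [Hn Hn0]].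
  { apply Rdiv_lt_0_compat; lra. }
  set (h := (y - x) / INR n).
  assert (HnR : 0 < INR n) by (apply lt_0_INR; auto).
  assert (Hh : 0 < h) by (unfold h; apply Rdiv_lt_0_compat; lra).
  assert (Hhd : h < Rmin d1 d2).
  { unfold h. apply (Rmult_lt_compat_l (y - x)) in Hn; [|lra].
    replace ((y - x) * (Rmin d1 d2 / (y - x))) with (Rmin d1 d2) in Hn by (field; lra). exact Hn. }
  assert (Hh1 : Rabs h < d1) by (rewrite Rabs_pos_eq by lra; pose proof (Rmin_l d1 d2); lra).
  assert (Hh2 : Rabs h < d2) by (rewrite Rabs_pos_eq by lra; pose proof (Rmin_r d1 d2); lra).
  specialize (Hd1 h ltac:(lra) Hh1). specialize (Hd2 h ltac:(lra) Hh2).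
  apply Rabs_lt_between' in Hd1. apply Rabs_lt_between' in Hd2.
  pose proof (LG_chain x h n Hx Hh) as C.
  replace (x + INR n * h) with y in C by (unfold h; field; lra).
  replace (x + INR (n + 1) * h) with (y + h) in C by (unfold h; rewrite plus_INR; simpl; field; lra).
  assert (Q : (LG (x + h) - LG x) / h <= (LG (y + h) - LG y) / h).
  { unfold Rdiv. apply Rmult_le_compat_r; [left; apply Rinv_0_lt_compat; lra | lra]. }
  unfold eps in *. lra.
Qed.


Fixpoint hs (a : R) (N : nat) : R := match N with O => 0 | S k => hs a k + 1 / (a + INR k) end.

Lemma psi_shift a N : 0 < a -> digamma a = digamma (a + INR N) - hs a N.
Proof.
  intro Ha. induction N.
  - simpl. rewrite Rplus_0_r. ring.
  - simpl hs. rewrite S_INR. pose proof (pos_INR N).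
    replace (a + (INR N + 1)) with (a + INR N + 1) by ring.
    rewrite psi_rec by lra. rewrite IHN at 1. ring.
Qed.

Lemma eventually_small eta : 0 < eta -> exists M : nat, forall b, 0 < b -> 1 / (b + INR (M + 2)) < eta.
Proof.
  intro He. destruct (archimed_cor1 eta He) as [n [Hn Hn0]]. exists n. intros b Hb.
  assert (0 < INR n) by (apply lt_0_INR; auto).
  rewrite plus_INR. simpl.
  eapply Rlt_trans; [|apply Hn]. unfold Rdiv. rewrite Rmult_1_l. apply Rinv_lt_contravar; nra.
Qed.


Definition sN (a b : R) N := hs b N - hs a N.

Lemma split_psi (a b : R) (hb : 0 < b) (hba : b < a) (ha : a <= 1) N : digamma a - digamma b = (digamma (a + INR N) - digamma (b + INR N)) + sN a b N.
Proof. unfold sN. rewrite (psi_shift a N), (psi_shift b N) by lra. ring. Qed.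

Lemma rem_bounds (a b : R) (hb : 0 < b) (hba : b < a) (ha : a <= 1) N : 0 <= digamma (a + INR N) - digamma (b + INR N) <= 1 / (b + INR N).
Proof.
  pose proof (pos_INR N).
  split.
  - pose proof (psi_mono (b + INR N) (a + INR N) ltac:(lra) ltac:(lra)). lra.
  - pose proof (psi_mono (a + INR N) (b + INR N + 1) ltac:(lra) ltac:(lra)).
    rewrite psi_rec in H0 by lra. lra.
Qed.

Lemma sN_step (a b : R) (hb : 0 < b) (hba : b < a) (ha : a <= 1) N : sN a b (S N) = sN a b N + (a - b) / ((a + INR N) * (b + INR N)).
Proof.
  unfold sN. simpl. pose proof (pos_INR N). field. split; lra.
Qed.

Lemma sN_lower (a b : R) (hb : 0 < b) (hba : b < a) (ha : a <= 1) M : sN a b (M + 2) >= (a - b) * (1 / (a * b) + 1 / ((1 + a) * (1 + b)) + 1 / (2 + b) - 1 / (b + INR (M + 2))).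
Proof.
  induction M.
  - simpl. unfold sN. simpl. right. field. repeat split; lra.
  - replace (S M + 2)%nat with (S (M + 2)) by lia. rewrite (sN_step a b hb hba ha).
    set (N := INR (M + 2)) in *.
    assert (HN : 0 <= N) by apply pos_INR.
    rewrite S_INR. fold N.
    assert (A : (a - b) / ((a + N) * (b + N)) >= (a - b) * (1 / (b + N) - 1 / (b + (N + 1)))).
    { replace ((a - b) * (1 / (b + N) - 1 / (b + (N + 1)))) with ((a - b) / ((b + N) * (b + N + 1))) by (field; lra).
      apply Rle_ge. unfold Rdiv. apply Rmult_le_compat_l; [lra|].
      apply Rinv_le_contravar. nra. nra. }
    lra.
Qed.

Lemma sN_upper (a b : R) (hb : 0 < b) (hba : b < a) (ha : a <= 1) M : sN a b (M + 2) <= (a - b) * (1 / (a * b) + 1 / ((1 + a) * (1 + b)) + zs (M + 1) - 1).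
Proof.
  induction M.
  - simpl. unfold sN. simpl. right. field. repeat split; lra.
  - replace (S M + 2)%nat with (S (M + 2)) by lia. rewrite (sN_step a b hb hba ha).
    replace (S M + 1)%nat with (S (M + 1)) by lia.
    change (zs (S (M + 1))) with (zs (M + 1) + / INR (S (M + 1)) ^ 2).
    replace (INR (S (M + 1))) with (INR (M + 2)) by (f_equal; lia).
    set (N := INR (M + 2)) in *.
    assert (HN : 2 <= N). { unfold N. rewrite plus_INR. simpl. pose proof (pos_INR M). lra. }
    assert (A : (a - b) / ((a + N) * (b + N)) <= (a - b) * / N ^ 2).
    { unfold Rdiv. apply Rmult_le_compat_l; [lra|].
      apply Rinv_le_contravar. nra. simpl. rewrite Rmult_1_r. apply Rmult_le_compat; lra. }
    lra.
Qed.



Theorem lemma5p2 (a b : R) (hb : 0 < b) (hba : b < a) (ha : a <= 1) :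
  ((a - b) * (1 / (a * b) + 1 / (b + 1)) < digamma a - digamma b /\
   digamma a - digamma b < (a - b) * (1 / (a * b) + PI ^ 2 / 6)) /\
  (1 / 2 < a -> 1 / 2 < b ->
   digamma a - digamma b < (a - b) * (1 / (a * b) + PI ^ 2 / 6 - 5 / 9)).
Proof.
  assert (Hq : 0 < 1 / ((1 + a) * (1 + b))) by (apply Rdiv_lt_0_compat; nra).
  split; [split|].
  - set (del := 1 / ((1 + a) * (1 + b)) - 1 / ((1 + b) * (2 + b))).
    assert (Hdel : 0 < del).
    { unfold del. apply Rlt_Rminus. unfold Rdiv. rewrite !Rmult_1_l. apply Rinv_lt_contravar. repeat apply Rmult_lt_0_compat; lra.
      rewrite (Rmult_comm (1+b) (2+b)); apply Rmult_lt_compat_r; lra. }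
    destruct (eventually_small del Hdel) as [M HM]. specialize (HM b hb).
    rewrite (split_psi a b hb hba ha (M + 2)).
    pose proof (rem_bounds a b hb hba ha (M + 2)) as [R1 R2].
    pose proof (sN_lower a b hb hba ha M) as S1.
    assert (E : 1 / (b + 1) = 1 / ((1 + b) * (2 + b)) + 1 / (2 + b)) by (field; lra).
    rewrite E. unfold del in *.
    assert ((a - b) * (1 / ((1 + a) * (1 + b)) - 1 / ((1 + b) * (2 + b)) - 1 / (b + INR (M + 2))) > 0).
    { apply Rmult_lt_0_compat; lra. }
    nra.
  - set (eta := 1 - 1 / ((1 + a) * (1 + b))).
    assert (Heta : 0 < eta).
    { unfold eta. assert (1 / ((1 + a) * (1 + b)) < 1). { apply (Rmult_lt_reg_r ((1 + a) * (1 + b))). nra.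
        unfold Rdiv. rewrite Rmult_1_l, Rinv_l by nra. nra. } lra. }
    destruct (eventually_small ((a - b) * eta) ltac:(apply Rmult_lt_0_compat; lra)) as [M HM]. specialize (HM b hb).
    rewrite (split_psi a b hb hba ha (M + 2)).
    pose proof (rem_bounds a b hb hba ha (M + 2)) as [R1 R2].
    pose proof (sN_upper a b hb hba ha M) as S1.
    pose proof (basel_le (M + 1)).
    assert ((a - b) * zs (M + 1) <= (a - b) * (PI ^ 2 / 6)) by (apply Rmult_le_compat_l; lra).
    unfold eta in *. nra.
  - intros Ha2 Hb2.
    set (eta := 4 / 9 - 1 / ((1 + a) * (1 + b))).
    assert (Heta : 0 < eta).
    { unfold eta. assert (1 / ((1 + a) * (1 + b)) < 4 / 9). { apply (Rmult_lt_reg_r ((1 + a) * (1 + b))). nra.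
        unfold Rdiv. rewrite Rmult_1_l, Rinv_l by nra. nra. } lra. }
    destruct (eventually_small ((a - b) * eta) ltac:(apply Rmult_lt_0_compat; lra)) as [M HM]. specialize (HM b hb).
    rewrite (split_psi a b hb hba ha (M + 2)).
    pose proof (rem_bounds a b hb hba ha (M + 2)) as [R1 R2].
    pose proof (sN_upper a b hb hba ha M) as S1.
    pose proof (basel_le (M + 1)).
    assert ((a - b) * zs (M + 1) <= (a - b) * (PI ^ 2 / 6)) by (apply Rmult_le_compat_l; lra).
    unfold eta in *. nra.
Qed.
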